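(* Let $k$ be an odd positive integer. Then $$\sum_{n=1}^{k-1}\frac{\cos^2(\pi n/k)}{\sin^4(2\pi n/k)}=\frac{1}{720}\left(k^4+70k^2-71\right).$$ *)

(* Defs.v *)
From Stdlib Require Import Reals Lra Lia.
Open Scope R_scope.

Fixpoint sum_upto (m : nat) (f : nat -> R) : R :=
  match m with
  | O => 0
  | S m' => sum_upto m' f + f m'
  end.
Definition sum_1_to (N : nat) (f : nat -> R) : R :=
  sum_upto N (fun i => f (S i)).

(* Main.v *)
Require Import Defs.
From Stdlib Require Import Reals Lra Lia.
Open Scope R_scope.
Definition fk (k n : nat) : R :=
  (cos (PI * INR n / INR k)) ^ 2 / (sin (2 * PI * INR n / INR k)) ^ 4.

Lemma xbounds k i : (0 < i)%nat -> (2*i < k)%nat ->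
  0 < PI * INR i / INR k /\ PI * INR i / INR k < PI/2.
Proof.
intros Hi Hk.
assert (Ki : 0 < INR i) by (apply lt_0_INR; lia).
assert (Kk : 2 * INR i + 1 <= INR k).
{ replace (2 * INR i + 1) with (INR (2*i+1)) by (rewrite plus_INR, mult_INR; simpl; ring).
  apply le_INR; lia. }
assert (P := PI_RGT_0).
set (y := PI * INR i / INR k).
assert (E : INR k * y = PI * INR i) by (unfold y; field; lra).
split.
- unfold y; apply Rdiv_lt_0_compat; nra.
- nra.
Qed.

Lemma sin_kx k i : (0 < k)%nat -> sin (INR k * (PI * INR i / INR k)) = 0.
Proof.
intros Hk. assert (0 < INR k) by (apply lt_0_INR; lia).
replace (INR k * (PI * INR i / INR k)) with (IZR (Z.of_nat i) * PI).
- apply sin_eq_0_1; eauto.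
- rewrite <- INR_IZR_INZ; field; lra.
Qed.

Lemma fk_sym k n : (0 < k)%nat -> (n <= k)%nat -> fk k (k - n) = fk k n.
Proof.
intros Hk Hn. assert (0 < INR k) by (apply lt_0_INR; lia).
unfold fk. rewrite minus_INR by exact Hn.
replace (PI * (INR k - INR n) / INR k) with (PI - PI * INR n / INR k) by (field; lra).
replace (2 * PI * (INR k - INR n) / INR k) with (2 * PI - 2 * PI * INR n / INR k) by (field; lra).
rewrite Rtrigo_facts.cos_pi_minus, sin_minus, sin_2PI, cos_2PI. unfold Rdiv; f_equal; [ring | f_equal; ring].
Qed.

Lemma fk_tan k i : (0 < i)%nat -> (2*i < k)%nat ->
  let t := tan (PI * INR i / INR k) in
  fk k i = ((/ (t^2))^2 + 3 * / (t^2) + 3 + t^2) / 16.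
Proof.
intros Hi Hk t.
destruct (xbounds k i Hi Hk) as [B1 B2].
assert (0 < INR k) by (apply lt_0_INR; lia).
set (x := PI * INR i / INR k) in *.
assert (Hc : 0 < cos x) by (apply cos_gt_0; lra).
assert (Hs : 0 < sin x) by (apply sin_gt_0; lra).
assert (H1 : sin x ^ 2 + cos x ^ 2 = 1) by (rewrite <- (sin2_cos2 x); unfold Rsqr; ring).
unfold fk. fold x. replace (2 * PI * INR i / INR k) with (2 * x) by (unfold x; field; lra).
rewrite sin_2a. unfold t, tan.
transitivity ((sin x ^ 2 + cos x ^ 2) ^ 3 / (16 * sin x ^ 4 * cos x ^ 2)).
- rewrite H1. field; lra.
- field; lra.
Qed.

Lemma tan_strict k i j : (0 < i)%nat -> (i < j)%nat -> (2*j < k)%nat ->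
  tan (PI * INR i / INR k) < tan (PI * INR j / INR k).
Proof.
intros Hi Hij Hk.
destruct (xbounds k i Hi ltac:(lia)) as [A1 A2].
destruct (xbounds k j ltac:(lia) Hk) as [B1 B2].
assert (0 < INR k) by (apply lt_0_INR; lia).
assert (HP := PI_RGT_0).
apply tan_increasing; try lra.
unfold Rdiv; apply Rmult_lt_compat_r; [apply Rinv_0_lt_compat; lra|].
apply Rmult_lt_compat_l; [lra|]. apply lt_INR; lia.
Qed.

Lemma pos_facts k i : (0 < i)%nat -> (2*i < k)%nat ->
  0 < cos (PI * INR i / INR k) /\ 0 < tan (PI * INR i / INR k).
Proof.
intros Hi Hk. destruct (xbounds k i Hi Hk) as [A1 A2].
split; [apply cos_gt_0; lra | apply tan_gt_0; lra].
Qed.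

From HB Require Import structures.
From mathcomp Require Import all_boot all_order all_algebra.
From mathcomp Require Import Rstruct.
From mathcomp Require Import ring zify lra.
Import Order.TTheory GRing.Theory Num.Theory.
Local Open Scope ring_scope.
Fixpoint ab (n : nat) : {poly R} * {poly R} :=
  match n with
  | O => (0, 1)
  | S n' => ((ab n').1 + (ab n').2, (ab n').2 - 'X * (ab n').1)
  end.

Lemma coef_ab n j :
  (ab n).1`_j = (-1) ^+ j * ('C(n, j.*2.+1))%:R /\
  (ab n).2`_j = (-1) ^+ j * ('C(n, j.*2))%:R.
Proof.
elim: n j => [|n IH] j /=.
  rewrite coef0 coef1; case: j => [|j] /=; first by rewrite !bin0 !mulr1 !mulr0.
  by rewrite !bin0n /= !mulr0.
rewrite coefD coefB coefXM.
have [h1 h2] := IH j.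
split; first by rewrite h1 h2 binS natrD; ring.
case: j h1 h2 => [|j] h1 h2 /=; first by rewrite h2 subr0 !bin0.
have [h3 _] := IH j.
rewrite h2 h3 doubleS binS natrD exprS mulrDr; ring.
Qed.
Lemma low_prod (ps : seq R) : all (fun p => p != 0) ps ->
  (\prod_(p <- ps) ('X - p%:P))`_0 = \prod_(p <- ps) (- p) /\
  (\prod_(p <- ps) ('X - p%:P))`_1 = - (\prod_(p <- ps) (- p)) * \sum_(p <- ps) p^-1 /\
  (\prod_(p <- ps) ('X - p%:P))`_2 = (\prod_(p <- ps) (- p)) *
     ((\sum_(p <- ps) p^-1) ^+ 2 - \sum_(p <- ps) (p^-1) ^+ 2) / 2.
Proof.
elim: ps => [|p ps IH] /=.
  rewrite !big_nil !coef1 /=. split. done. split. ring. ring.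
move=> /andP [pn0 /IH [h0 [h1 h2]]].
rewrite !big_cons !mulrBl !coefB !coefXM !coefCM /= h0 h1 h2.
split; first ring.
split; field; exact: pn0.
Qed.
Lemma trig_ab n x : cos x != 0 ->
  sin (INR n * x) = cos x ^+ n * tan x * (ab n).1.[tan x ^+ 2] /\
  cos (INR n * x) = cos x ^+ n * (ab n).2.[tan x ^+ 2].
Proof.
move=> cn0.
have sE : sin x = tan x * cos x.
  by rewrite /tan RdivE -mulrA mulVf // mulr1.
elim: n => [|n [IH1 IH2]].
  rewrite Rmult_0_l sin_0 cos_0 horner0 hornerC R0E R1E; split; ring.
rewrite S_INR R1E RplusE !RmultE mulrDl mul1r.
rewrite sinD cosD IH1 IH2.
change (ab n.+1) with ((ab n).1 + (ab n).2, (ab n).2 - 'X * (ab n).1).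
rewrite /= hornerD hornerD hornerN hornerM hornerX.
set t := tan x. set A := (ab n).1.[_]. set B := (ab n).2.[_].
rewrite sE -/t ?RminusE ?RplusE ?RmultE ?RoppE.
have K : forall (c t a b : R) n, (c^+n*t*a*c + c^+n*b*(t*c) = c^+n.+1*t*(a+b)) /\
   (c^+n*b*c - c^+n*t*a*(t*c) = c^+n.+1*(b - t^+2*a)).
  by move=> c t0 a b m; rewrite exprS; split; ring.
exact: K.
Qed.
Lemma binR (n : nat) :
  [/\ ('C(n,1))%:R = n%:R :> R,
      ('C(n,2))%:R = n%:R * (n%:R - 1) / 2 :> R,
      ('C(n,3))%:R = n%:R * (n%:R - 1) * (n%:R - 2) / 6 :> R,
      ('C(n,4))%:R = n%:R * (n%:R - 1) * (n%:R - 2) * (n%:R - 3) / 24 :> R &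
      ('C(n,5))%:R = n%:R * (n%:R - 1) * (n%:R - 2) * (n%:R - 3) * (n%:R - 4) / 120 :> R].
Proof.
elim: n => [|n [h1 h2 h3 h4 h5]]; first by rewrite !bin0n /=; split; field.
rewrite !binS !natrD bin0 h1 h2 h3 h4 h5.
by split; field.
Qed.
Lemma sum_split (rs : seq R) :
  \sum_(s <- rs) (((s^-1)^+2 + 3 * s^-1 + 3 + s) / 16) =
  (\sum_(s <- rs) (s^-1)^+2 + 3 * \sum_(s <- rs) s^-1 + 3 * (size rs)%:R + \sum_(s <- rs) s) / 16.
Proof.
elim: rs => [|a l IH]; first by rewrite !big_nil /=; ring.
by rewrite !big_cons IH /= mulrS; ring.
Qed.

Lemma main_sum m : (0 < m)%N ->
  let k := (2 * m + 1)%N in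
  \sum_(s <- [seq tan (PI * INR i.+1 / INR k) ^+ 2 | i <- iota 0 m])
     (((s^-1)^+2 + 3 * s^-1 + 3 + s) / 16)
   = ((k%:R)^+4 + 70 * (k%:R)^+2 - 71) / 1440 :> R.
Proof.
move=> m0 k.
set rs := [seq _ | i <- iota 0 m].
have k0 : (0 < k)%N by rewrite /k; lia.
have facts : forall i, (i < m)%N ->
    0 < cos (PI * INR i.+1 / INR k) /\ 0 < tan (PI * INR i.+1 / INR k).
  move=> i im; have [h1 h2] := pos_facts k i.+1 ltac:(lia) ltac:(rewrite /k; lia).
  by split; apply/RltP.
set p := (ab k).1.
have rootP : all (root p) rs.
  apply/allP => s /mapP [i ii ->]; rewrite mem_iota in ii.
  have [c0 t0] := facts i ltac:(lia).
  have [h _] := trig_ab k (PI * INR i.+1 / INR k) (lt0r_neq0 c0).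
  rewrite (sin_kx k i.+1 ltac:(lia)) in h.
  rewrite /root; move: h.
  set t := tan _ in t0 *. set cc := cos _ in c0 *. set v := horner _ _.
  clearbody t cc.
  move/esym/eqP; rewrite !mulf_eq0 expf_eq0 (negbTE (lt0r_neq0 c0)) (negbTE (lt0r_neq0 t0)) andbF /=.
  by rewrite /v /p.
have nz : all (fun s => s != 0) rs.
  apply/allP => s /mapP [i ii ->]; rewrite mem_iota in ii.
  have [_ t0] := facts i ltac:(lia).
  by rewrite expf_neq0 // lt0r_neq0.
have urs : uniq_roots rs.
  rewrite uniq_rootsE map_inj_in_uniq ?iota_uniq // => i j ii jj.
  rewrite !mem_iota in ii jj.
  have [_ ti] := facts i ltac:(lia). have [_ tj] := facts j ltac:(lia).
  move/eqP; rewrite eqrXn2 ?ltW // => /eqP E.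
  case: (ltngtP i j) => // ij; exfalso.
  - have := tan_strict k i.+1 j.+1 ltac:(lia) ltac:(lia) ltac:(rewrite /k; lia).
    by move/RltP; rewrite E ltxx.
  - have := tan_strict k j.+1 i.+1 ltac:(lia) ltac:(lia) ltac:(rewrite /k; lia).
    by move/RltP; rewrite E ltxx.
have [q pq] := uniq_roots_prod_XsubC rootP urs.
set P := \prod_(z <- rs) ('X - z%:P) in pq.
have srs : size rs = m by rewrite size_map size_iota.
have sP : size P = m.+1 by rewrite /P (size_prod_XsubC _ id) srs.
have cp j : p`_j = (-1) ^+ j * ('C(k, j.*2.+1))%:R := (coef_ab k j).1.
have [b1 b2 b3 b4 b5] := binR k.
have p0 : p`_0 = k%:R by rewrite cp expr0 mul1r b1.
have kr0 : k%:R != 0 :> R by rewrite pnatr_eq0; lia.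
have pn0 : p != 0 by apply/eqP => E; move: p0; rewrite E coef0 => /esym/eqP; rewrite (negbTE kr0).
have sp : (size p <= m.+1)%N.
  apply/leq_sizeP => j jm; rewrite cp bin_small ?mulr0 //; rewrite /k -mul2n; lia.
have Pn0 : P != 0 by rewrite -size_poly_gt0 sP.
have qn0 : q != 0 by apply/eqP => E; move: pn0; rewrite pq E mul0r eqxx.
have sq : (size q <= 1)%N.
  by move: sp; rewrite pq size_mul // sP addnS /= -(addn1 m) [(size q + m)%N]addnC leq_add2l.
set c := q`_0.
have cE j : p`_j = c * P`_j by rewrite pq (size1_polyC sq) coefCM.
have [L0 [L1 L2]] := low_prod _ nz.
rewrite -/P in L0 L1 L2.
set Pi := \prod_(s <- rs) - s in L0 L1 L2.
set S := \sum_(s <- rs) s^-1 in L1 L2.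
set Q := \sum_(s <- rs) (s^-1)^+2 in L2.
have e0 : c * Pi = k%:R by rewrite -L0 -cE p0.
have e1 : c * (- Pi * S) = - ('C(k,3))%:R by rewrite -L1 -cE cp expr1 mulN1r.
have e2 : c * (Pi * (S ^+ 2 - Q) / 2) = ('C(k,5))%:R by rewrite -L2 -cE cp sqrrN expr1n mul1r.
have hS : S = ('C(k,3))%:R / k%:R.
  have e : k%:R * S = ('C(k,3))%:R by rewrite -e0; rewrite -[RHS]opprK -e1; ring.
  by rewrite -e; field.
have hQ : Q = S ^+ 2 - 2 * ('C(k,5))%:R / k%:R.
  have e : k%:R * (S ^+ 2 - Q) = 2 * ('C(k,5))%:R by rewrite -e0 -e2; field.
  by rewrite -e; field.
have Ptop : P`_m = 1.
  by have := lead_coef_prod_XsubC rs predT id; rewrite lead_coefE -/P sP.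
have kE : k = m.*2.+1 by rewrite /k -mul2n addn1.
have hc : c = (-1) ^+ m by have := cE m; rewrite Ptop mulr1 cp -kE binn mulr1.
set T := \sum_(s <- rs) s.
have hT : T = ('C(k,2))%:R.
  have [m' mE] : exists m', m = m'.+1 by exists m.-1; rewrite prednK.
  have rs0 : size rs != 0%N by rewrite srs mE.
  have Ptop1 := coefPn_prod_XsubC rs0.
  rewrite srs -/P -/T in Ptop1.
  have := cE m.-1; rewrite Ptop1 ?mE // cp hc mE /=.
  have -> : (m'.*2.+1 = k - 2)%N by rewrite /k mE; lia.
  rewrite bin_sub; last by rewrite /k; lia.
  rewrite exprS -[(-1) ^+ m']signr_odd; case: (odd m') => /=; rewrite ?expr1 ?expr0 => E; lra.
have mR : m%:R = (k%:R - 1) / 2 :> R by rewrite /k natrD natrM; field.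
rewrite sum_split srs -/Q -/S -/T hQ hS hT mR b2 b3 b5.
by field.
Qed.
Lemma sum_upto_big n g : sum_upto n g = \sum_(0 <= i < n) g i.
Proof. by elim: n => [|n IH]; rewrite ?big_nil // big_nat_recr //= IH. Qed.

Lemma numE (p : positive) : IZR (Zpos p) = (nat_of_pos p)%:R.
Proof. by rewrite IZRposE INRE. Qed.

Lemma final_m m : (0 < m)%N ->
  sum_upto (2 * m) (fun i => fk (2 * m + 1) i.+1) =
  2 * ((((2 * m + 1)%N)%:R ^+ 4 + 70 * ((2 * m + 1)%N)%:R ^+ 2 - 71) / 1440).
Proof.
move=> m0.
have := main_sum _ m0; cbv zeta => <-.
rewrite sum_upto_big (@big_cat_nat _ _ _ m) //; last by lia.
rewrite (big_addn 0 (2 * m) m).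
have -> : (2 * m - m = m)%N by lia.
rewrite [X in _ + X = _]big_nat_rev /=.
rewrite [X in _ + X = _](eq_big_nat _ _ (F2 := fun i => fk (2 * m + 1) i.+1)); last first.
  move=> i /andP [_ im].
  rewrite -(fk_sym (2 * m + 1) i.+1); [|lia|lia].
  congr fk; lia.
rewrite big_map /index_iota subn0 mulr_natl mulr2n.
congr (_ + _); apply: eq_big_seq => i; rewrite mem_iota => /andP [_ im];
 (rewrite (fk_tan (2 * m + 1) i.+1); [|lia|lia]);
 rewrite !numE ?RdivE ?RplusE ?RmultE ?RinvE ?RpowE. all: reflexivity.
Qed.
Lemma n720 : IZR (Zpos 720%positive) = 720 :> R. Proof. by rewrite numE. Qed.
Lemma n70 : IZR (Zpos 70%positive) = 70 :> R. Proof. by rewrite numE. Qed.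
Lemma n71 : IZR (Zpos 71%positive) = 71 :> R. Proof. by rewrite numE. Qed.

Local Close Scope ring_scope.
Open Scope R_scope.

Theorem mainTheorem6 (k : nat) (hk : Nat.odd k = true) :
  sum_1_to (k - 1)%coq_nat
    (fun n => (cos (PI * INR n / INR k)) ^ 2 / (sin (2 * PI * INR n / INR k)) ^ 4)
  = / 720 * ((INR k) ^ 4 + 70 * (INR k) ^ 2 - 71).
Proof.
change (k - 1)%coq_nat with (k - 1)%N.
have [m km] := proj1 (Nat.odd_spec k) hk.
have {km} -> : k = (2 * m + 1)%N by lia.
have -> : (2 * m + 1 - 1 = 2 * m)%N by lia.
rewrite /sum_1_to.
change (sum_upto (2 * m) (fun i => fk (2 * m + 1) i.+1) = / 720 * (INR (2 * m + 1) ^ 4 + 70 * INR (2 * m + 1) ^ 2 - 71)).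
rewrite INRE !RpowE n720 n70 n71 RinvE RmultE RminusE !RplusE !RmultE.
case: (eqVneq m 0%N) => [m0|m0].
  by rewrite m0 /= R0E; field.
have m1 : (0 < m)%N by rewrite lt0n.
by rewrite final_m //; field.
Qed.
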